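(* Let $b\ge0$ be an integer and let $t$ be a join node of a rooted nice tree decomposition of the Tanner graph $G$ with children $t_1,t_2$ ($B_t=B_{t_1}=B_{t_2}$). For $I\subseteq B_t^c$, $Q\subseteq B_t^v$, $d\in\{0,\dots,b\}$ let $$F_t(I,Q,d)=\min\{f_{t_1}(I_1,Q,d_1)+f_{t_2}(I_2,Q,d_2)-|Q|\},\qquad G_t(I,Q,d)=\sum g_{t_1}(I_1,Q,d_1)\,g_{t_2}(I_2,Q,d_2),$$ the minimum taken over all $(I_1,I_2,d_1,d_2)$ with $I_1,I_2\subseteq B_t^c$, $d_1,d_2\ge0$ integers, $I=I_1\oplus I_2\oplus\Gamma_o(G_t[Q\cup B_t^c])$ and $d=d_1+d_2$, and the sum over those tuples attaining the minimum. Then: if $Q\ne\emptyset$, $f_t(I,Q,d)=F_t(I,Q,d)$ and $g_t(I,Q,d)=G_t(I,Q,d)$; if $Q=\emptyset$, $f_t(I,Q,d)=\min\{F_t(I,Q,d),f_{t_1}(I,Q,d),f_{t_2}(I,Q,d)\}$ and $$g_t(I,Q,d)=\mathbb 1_{f_t=F_t}G_t(I,Q,d)+\mathbb 1_{f_t=f_{t_1}}g_{t_1}(I,Q,d)+\mathbb 1_{f_t=f_{t_2}}g_{t_2}(I,Q,d),$$ all functions evaluated at $(I,Q,d)$, where $\mathbb 1_{x=y}$ is $1$ if $x=y$ and $0$ otherwise (whenever the minimum is finite).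
   Context: $G=(\mathcal L\cup\mathcal R,E)$ is a Tanner graph (bipartite, variable nodes $\mathcal L$, check nodes $\mathcal R$). For a subgraph $H$ of $G$ and $S\subseteq\mathcal L$ in $H$, $H[S]$ is the subgraph of $H$ induced by $S$ together with its neighbours in $H$; for $L\subseteq\mathcal L$, $R\subseteq\mathcal R$, $H[L\cup R]$ is the subgraph of $H$ induced on the vertex set $L\cup R$. $\Gamma_o(\cdot)$ is the set of odd-degree check nodes in the indicated subgraph; $\oplus$ is symmetric difference. A trapping set is a nonempty subset of $\mathcal L$. A rooted nice tree decomposition $(T,(B_t))$ is a rooted tree decomposition (every vertex and edge lies in some bag; bags containing a given vertex form a connected subtree) where every node has at most two children, root and leaves have empty bags, a node with two children (join node) has the same bag as each child, and a node $t$ with one child $t'$ has $B_t=B_{t'}\cup\{v\}$ or $B_t=B_{t'}\setminus\{v\}$. For a node $t$: $B_t^c=B_t\cap\mathcal R$, $B_t^v=B_t\cap\mathcal L$; $G_t$ is the subgraph of $G$ induced on the union of the bags of all descendants of $t$ (including $t$); $\mathcal L(G_t)$ is its set of variable nodes. For $I\subseteq B_t^c$, $Q\subseteq B_t^v$ and an integer $d\ge0$, a trapping set $S$ has parameters $(I,Q,d)$ in $G_t$ if $S\subseteq\mathcal L(G_t)$, $S\cap B_t^v=Q$, $\Gamma_o(G_t[S])\cap B_t^c=I$ and $|\Gamma_o(G_t[S])\setminus I|=d$. $f_t(I,Q,d)$ is the minimum size of a trapping set with parameters $(I,Q,d)$ in $G_t$ ($+\infty$ if none), and $g_t(I,Q,d)$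 is the number of such trapping sets of size $f_t(I,Q,d)$ ($0$ if none). *)

(* Defs.v *)
From mathcomp Require Import all_boot.
Set Implicit Arguments. Unset Strict Implicit. Unset Printing Implicit Defensive.

(* Extended naturals nat ∪ {+oo}: None = +oo. *)
Definition omin (a b : option nat) : option nat :=
  match a, b with
  | None, _ => b
  | _, None => a
  | Some x, Some y => Some (minn x y)
  end.

Definition oadd (a b : option nat) : option nat :=
  match a, b with
  | Some x, Some y => Some (x + y)
  | _, _ => None
  end.

Definition symd (T : finType) (A B : {set T}) : {set T} := (A :\: B) :|: (B :\: A).

Section Tanner.
(* Tanner graph: variable nodes L, check nodes R, vertex type L + R,
   edges l -- r whenever adj l r. *)
Variables (L R : finType) (adj : L -> R -> bool).

Definition gadj (x y : L + R) : bool :=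
  match x, y with
  | inl l, inr r => adj l r
  | inr r, inl l => adj l r
  | _, _ => false
  end.

Definition gamma_o (U : {set L + R}) : {set R} :=
  [set c : R | (inr c \in U) && odd #|[set y in U | gadj (inr c) y]|].

(* H[S]: for H the subgraph induced on W, the subgraph induced by S
   together with its neighbours in H *)
Definition sub_nb (W : {set L + R}) (S : {set L}) : {set L + R} :=
  [set x in W | (x \in @inl L R @: S) || [exists l in S, gadj (inl l) x]].

Variables (N : finType) (par : N -> option N) (bag : N -> {set L + R}).

Definition desc (u t : N) : bool := connect [rel a b | par a == Some b] u t.
Definition children (t : N) : {set N} := [set c | par c == Some t].
Definition tree_adj : rel N := fun x y => (par x == Some y) || (par y == Some x).
Definition connected_in (S : {set N}) : Prop :=
  forall x y, x \in S -> y \in S ->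
    connect [rel a b | [&& a \in S, b \in S & tree_adj a b]] x y.

Definition rooted_tree : Prop :=
  exists r, par r = None /\ forall u, desc u r.

Definition tree_decomposition : Prop :=
  [/\ rooted_tree,
      (forall v : L + R, exists t, v \in bag t),
      (forall l r, adj l r -> exists t, (inl l \in bag t) && (inr r \in bag t))
    & (forall v : L + R, connected_in [set t | v \in bag t])].

Definition rooted_nice_td : Prop :=
  tree_decomposition /\
  [/\
      (forall t, #|children t| <= 2),
      (forall t, par t = None -> bag t = set0),
      (forall t, children t = set0 -> bag t = set0),
      (forall t c, #|children t| = 2 -> c \in children t -> bag c = bag t)
    &
      (forall t c, children t = [set c] ->
        exists v, bag t = v |: bag c \/ bag t = bag c :\ v)].

Definition Bc (t : N) : {set R} := [set c | inr c \in bag t].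
Definition Bv (t : N) : {set L} := [set l | inl l \in bag t].
Definition VG (t : N) : {set L + R} := \bigcup_(u | desc u t) bag u.
Definition LG (t : N) : {set L} := [set l | inl l \in VG t].

Definition TS (t : N) (I : {set R}) (Q : {set L}) (d : nat) : {set {set L}} :=
  [set S : {set L} | [&& S != set0, S \subset LG t, S :&: Bv t == Q,
     gamma_o (sub_nb (VG t) S) :&: Bc t == I
   & #|gamma_o (sub_nb (VG t) S) :\: I| == d]].

Definition fDP (t : N) I Q (d : nat) : option nat :=
  \big[omin/None]_(S in TS t I Q d) Some #|S|.
Definition gDP (t : N) I Q (d : nat) : nat :=
  #|[set S in TS t I Q d | Some #|S| == fDP t I Q d]|.

Definition indQ (t : N) (Q : {set L}) : {set L + R} :=
  [set x in VG t | (x \in @inl L R @: Q) || (x \in @inr L R @: Bc t)].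

Definition okT (t : N) (I : {set R}) (Q : {set L}) (d : nat)
  (p : {set R} * {set R} * 'I_d.+1 * 'I_d.+1) : bool :=
  let: (I1, I2, d1, d2) := p in
  [&& I1 \subset Bc t, I2 \subset Bc t,
      I == symd (symd I1 I2) (gamma_o (indQ t Q)) & (d1 + d2 == d)%N].

Definition costT (t1 t2 : N) (Q : {set L}) (d : nat)
  (p : {set R} * {set R} * 'I_d.+1 * 'I_d.+1) : option nat :=
  let: (I1, I2, d1, d2) := p in
  omap (fun n => n - #|Q|) (oadd (fDP t1 I1 Q d1) (fDP t2 I2 Q d2)).

Notation tup R d := ({set R} * {set R} * 'I_d.+1 * 'I_d.+1)%type.

Definition Fjoin (t t1 t2 : N) I Q (d : nat) : option nat :=
  \big[omin/None]_(p : tup R d | okT t I Q p) costT t1 t2 Q p.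

Definition Gjoin (t t1 t2 : N) I Q (d : nat) : nat :=
  \sum_(p : tup R d | okT t I Q p && (costT t1 t2 Q p == Fjoin t t1 t2 I Q d))
     (let: (I1, I2, d1, d2) := p in gDP t1 I1 Q d1 * gDP t2 I2 Q d2).

End Tanner.

(* Main.v *)
Require Import Defs.
From mathcomp Require Import all_boot zify.
Set Implicit Arguments. Unset Strict Implicit. Unset Printing Implicit Defensive.

Definition ole (a : option nat) (k : nat) : bool := if a is Some x then x <= k else false.

Lemma ole_eq a b : (forall k, ole a k = ole b k) -> a = b.
Proof.
case: a => [x|]; case: b => [y|] //= H.
- have := H x; have := H y; rewrite !leqnn => h1 h2.
  by congr Some; apply/eqP; rewrite eqn_leq h1 -h2.
- by have := H x; rewrite leqnn.
- by have := H y; rewrite leqnn.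
Qed.

Lemma ole_omin a b k : ole (omin a b) k = ole a k || ole b k.
Proof. by case: a => [x|]; case: b => [y|] //=; rewrite ?orbF // geq_min. Qed.

Lemma ole_bigs (I : eqType) (r : seq I) (P : pred I) F k :
  ole (\big[omin/None]_(i <- r | P i) F i) k = has (fun i => P i && ole (F i) k) r.
Proof.
elim: r => [|x r IH]; first by rewrite big_nil.
by rewrite big_cons /=; case: (P x) => //=; rewrite ole_omin IH.
Qed.

Lemma ole_big (I : finType) (P : pred I) F k :
  ole (\big[omin/None]_(i | P i) F i) k = [exists i, P i && ole (F i) k].
Proof.
rewrite ole_bigs; apply/hasP/existsP => [[i _ h]|[i h]]; first by exists i.
by exists i => //; rewrite mem_index_enum.
Qed.

Lemma ole_omap q a k : ole (omap (fun n => n - q) a) k = ole a (k + q).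
Proof. by case: a => [x|] //=; rewrite leq_subLR addnC. Qed.

Lemma ole_oadd a b k : ole (oadd a b) k ->
  exists x y, [/\ a = Some x, b = Some y & x + y <= k].
Proof. by case: a => [x|]; case: b => [y|] //= h; exists x, y. Qed.

Lemma ole_mono a k k' : k <= k' -> ole a k -> ole a k'.
Proof. by case: a => [x|] //= h1 h2; apply: leq_trans h2 h1. Qed.

Section FM.
Variable T : finType.
Definition fmin (A : {set T}) (w : T -> nat) := \big[omin/None]_(S in A) Some (w S).

Lemma ole_fmin (A : {set T}) (w : T -> nat) k : ole (fmin A w) k = [exists S in A, w S <= k].
Proof. by rewrite /fmin ole_big. Qed.

Lemma fmin_some (A : {set T}) (w : T -> nat) m : fmin A w = Some m ->
  (exists2 S, S \in A & w S = m) /\ (forall S, S \in A -> m <= w S).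
Proof.
move=> h; split.
- have := ole_fmin A w m; rewrite h /= leqnn => /esym/existsP[S /andP[SA hS]].
  exists S => //; apply/eqP; rewrite eqn_leq hS /=.
  by have := ole_fmin A w (w S); rewrite h /= => ->; apply/existsP; exists S; rewrite SA leqnn.
- move=> S SA; have := ole_fmin A w (w S); rewrite h /= => ->.
  by apply/existsP; exists S; rewrite SA leqnn.
Qed.

Lemma fmin_in (A : {set T}) (w : T -> nat) S : S \in A -> exists m, fmin A w = Some m /\ m <= w S.
Proof.
move=> SA; have := ole_fmin A w (w S).
case: (fmin A w) => [m|] /= h; first by exists m; split => //; rewrite h; apply/existsP; exists S; rewrite SA leqnn.
by move: h; have -> : [exists S0 in A, w S0 <= w S] by apply/existsP; exists S; rewrite SA leqnn.
Qed.

Lemma fmin_U (A B : {set T}) (w : T -> nat) : fmin (A :|: B) w = omin (fmin A w) (fmin B w).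
Proof.
apply: ole_eq => k; rewrite ole_omin !ole_fmin.
apply/existsP/orP => [[S /andP[]]|].
- by rewrite inE => /orP[] h1 h2; [left|right]; apply/existsP; exists S; rewrite h1.
- by case=> /existsP[S /andP[h1 h2]]; exists S; rewrite inE h1 ?orbT.
Qed.

Definition cnt (A : {set T}) (w : T -> nat) m := #|[set S in A | w S == m]|.

Lemma cnt0 (A : {set T}) (w : T -> nat) m : fmin A w != Some m -> (forall S, S \in A -> m <= w S) -> cnt A w m = 0.
Proof.
move=> hne hge; apply/eqP; rewrite cards_eq0; apply/eqP/setP => S; rewrite !inE.
apply/negP => /andP[SA /eqP hS].
have [m' [h1 h2]] := fmin_in w SA.
have [[S' S'A hS'] _] := fmin_some h1.
have := hge _ S'A; rewrite hS' => h4.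
by move: hne; rewrite h1 (@anti_leq m' m) ?eqxx // h4 -hS h2.
Qed.

Lemma cnt_ind (A U : {set T}) (w : T -> nat) m : A \subset U -> fmin U w = Some m ->
  cnt A w m = (Some m == fmin A w) * cnt A w m.
Proof.
move=> sAU hU; case: eqP => [_|hne]; first by rewrite mul1n.
rewrite mul0n; apply: cnt0; first by apply/eqP => h; apply: hne.
by move=> S SA; have [_ ] := fmin_some hU; apply; apply: (subsetP sAU).
Qed.

Lemma cntU (A B : {set T}) (w : T -> nat) m : [disjoint A & B] -> cnt (A :|: B) w m = cnt A w m + cnt B w m.
Proof.
move=> dAB; rewrite /cnt -cardsUI.
have -> : [set S in A | w S == m] :&: [set S in B | w S == m] = set0.
  apply/setP=> S; rewrite !inE; apply/negP => /and3P[/andP[h1 _] h2 _].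
  by move/disjointFr: dAB => /(_ _ h1); rewrite h2.
rewrite cards0 addn0; apply: eq_card => S; rewrite !inE.
by case: (S \in A); case: (S \in B); case: (w S == m).
Qed.
End FM.

Lemma crossing (N : eqType) (e : rel N) (X : pred N) x p :
  path e x p -> X x -> ~~ X (last x p) -> exists a b, [/\ X a, ~~ X b & e a b].
Proof.
elim: p x => [|y p IH] x /=; first by move=> _ ->.
move=> /andP[exy hp] Xx hl; case Xy: (X y); first exact: (IH y hp Xy hl).
by exists x, y; rewrite Xy.
Qed.

Lemma card_pair (T1 T2 : finType) (P : T1 -> T2 -> bool) :
  #|[set x : T1 * T2 | P x.1 x.2]| = \sum_a #|[set y | P a y]|.
Proof.
transitivity (\sum_a \sum_(b | P a b) 1).
  by rewrite (pair_big_dep xpredT P (fun _ _ => 1)) /= sum1dep_card.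
by apply: eq_bigr => a _; rewrite sum1dep_card.
Qed.

Section Struct.
Variables (L R : finType) (adj : L -> R -> bool) (N : finType) (par : N -> option N)
  (bag : N -> {set L + R}).
Hypothesis Htd : rooted_nice_td adj par bag.
Variables (t t1 t2 : N).
Hypotheses (Ht1 : par t1 = Some t) (Ht2 : par t2 = Some t) (Hne : t1 != t2).

Local Notation desc := (desc par).
Definition step (o : option N) := obind par o.
Definition it n u := iter n step (Some u).

Lemma desc_refl u : desc u u.
Proof. exact: connect0. Qed.

Lemma desc_step u v w : par u = Some v -> desc v w -> desc u w.
Proof. by move=> h; apply: connect_trans; apply: connect1; rewrite /= h. Qed.

Lemma path_it u p : path [rel a b | par a == Some b] u p -> it (size p) u = Some (last u p).
Proof.
elim: p u => [|x p IH] u // /andP[/eqP h hp].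
by rewrite /it iterSr /= h; apply: IH.
Qed.

Lemma desc_it u v : desc u v -> exists n, it n u = Some v.
Proof. by move/connectP=> [p hp ->]; exists (size p); apply: path_it. Qed.

Lemma iter_None n : iter n step None = None.
Proof. by elim: n => //= n ->. Qed.

Lemma it_uniq r u a b : par r = None -> it a u = Some r -> it b u = Some r -> a = b.
Proof.
move=> hr.
wlog lab : a b / a <= b => [hw ha hb|].
  by case/orP: (leq_total a b) => h; [apply: hw|apply/esym; apply: hw].
move=> ha hb; case: (ltngtP a b) lab => // hlt _.
move: hb; rewrite /it -(subnK (ltnW hlt)) iterD.
rewrite -/(it a u) ha.
case: (b - a) (subn_gt0 a b) => [|n]; first by rewrite hlt.
by rewrite iterSr /= hr iter_None.
Qed.

Lemma desc_child u v : desc u v -> u != v -> exists c, par c = Some v /\ desc u c.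
Proof.
move/connectP=> [p hp ->]; elim: p u hp => [|x p IH] u /=; first by rewrite eqxx.
move=> /andP[/eqP hx hp] hne.
case: (eqVneq x (last x p)) => [hxl|hxl].
  by exists u; rewrite -hxl hx desc_refl.
have [c [hc hd]] := IH x hp hxl.
by exists c; split => //; apply: desc_step hd.
Qed.

Lemma desc_par u v : desc u v -> u != v -> exists w, par u = Some w /\ desc w v.
Proof.
move/connectP=> [[|x p] /=]; first by move=> _ ->; rewrite eqxx.
move=> /andP[/eqP hx hp] -> _; exists x; split => //.
by apply/connectP; exists p.
Qed.

Lemma children_eq c : par c = Some t -> c = t1 \/ c = t2.
Proof.
case: Htd => _ [hc2 _ _ _ _] hc.
have sub : [set t1; t2] \subset children par t.
  by apply/subsetP => x; rewrite !inE => /orP[] /eqP ->; rewrite ?Ht1 ?Ht2.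
have hcard : #|[set t1; t2]| = #|children par t|.
  apply/anti_leq; rewrite subset_leq_card //= cards2 Hne; exact: hc2.
have e := subset_cardP hcard sub.
have : c \in children par t by rewrite inE hc.
by rewrite -e !inE => /orP[] /eqP; [left|right].
Qed.

Lemma card_children : #|children par t| = 2.
Proof.
case: Htd => _ [hc2 _ _ _ _].
have sub : [set t1; t2] \subset children par t.
  by apply/subsetP => x; rewrite !inE => /orP[] /eqP ->; rewrite ?Ht1 ?Ht2.
apply/anti_leq; rewrite hc2 /=.
by have := subset_leq_card sub; rewrite cards2 Hne.
Qed.

Lemma bag_child c : par c = Some t -> bag c = bag t.
Proof.
case: Htd => _ [_ _ _ hj _] hc; apply: hj; first exact: card_children.
by rewrite inE hc.
Qed.

Lemma desc_t u : desc u t = [|| u == t, desc u t1 | desc u t2].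
Proof.
apply/idP/idP.
- case: (eqVneq u t) => [->|hne] // hd.
  have [c [hc hdc]] := desc_child hd hne.
  by case: (children_eq hc) => <-; rewrite hdc ?orbT.
- case/or3P => [/eqP->|h|h]; first exact: desc_refl.
  + by apply: connect_trans h _; apply: connect1; rewrite /= Ht1.
  + by apply: connect_trans h _; apply: connect1; rewrite /= Ht2.
Qed.

Lemma desc_disj a b u : par a = Some t -> par b = Some t -> a != b ->
  desc u a -> desc u b -> False.
Proof.
move=> ha hb hab dua dub.
case: Htd => [[[r [hr hroot]] _ _ _] _].
have [ka hka] := desc_it dua; have [kb hkb] := desc_it dub.
have [ja hja] := desc_it (hroot a); have [jb hjb] := desc_it (hroot b).
have [i hi] := desc_it (hroot t).
have e1 : it (i + 1) a = Some r by rewrite /it iterD /= ha.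
have e2 : it (i + 1) b = Some r by rewrite /it iterD /= hb.
have fa : it (ja + ka) u = Some r by rewrite /it iterD -/(it ka u) hka.
have fb : it (jb + kb) u = Some r by rewrite /it iterD -/(it kb u) hkb.
have := it_uniq hr hja e1; have := it_uniq hr hjb e2; move=> eb ea.
have := it_uniq hr fa fb; rewrite ea eb => /eqP; rewrite eqn_add2l => /eqP ek.
by move: hka; rewrite ek hkb => -[] hba; move: hab; rewrite hba eqxx.
Qed.

Lemma cross c v u u1 : par c = Some t -> v \in bag u -> v \in bag u1 -> desc u1 c ->
  v \notin bag t -> desc u c.
Proof.
move=> hc vu vu1 du1 vt; apply/negPn/negP => ndu.
case: Htd => [[_ _ _ hconn] _].
have := hconn v u1 u; rewrite !inE => /(_ vu1 vu) /connectP [p hp hl].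
have nX : ~~ desc (last u1 p) c by rewrite -hl.
have [a [b [Xa nXb /and3P[va vb hab]]]] :=
  @crossing _ _ (fun x => desc x c) _ _ hp du1 nX.
rewrite inE in vb.
case/orP: hab => /eqP h.
- case: (eqVneq a c) => [eac|nac].
    by move: h; rewrite eac hc => -[] ebt; move: vt; rewrite ebt vb.
  have [c' [hc' dc']] := desc_par Xa nac.
  by move: h; rewrite hc' => -[] e; move: nXb; rewrite -e dc'.
- by move: nXb; rewrite (desc_step h Xa).
Qed.


Definition deg (S : {set L}) (c : R) := #|[set l in S | adj l c]|.

Lemma gam_gen (U : {set L + R}) :
  gamma_o adj U = [set c | (inr c \in U) && odd #|[set l | (inl l \in U) && adj l c]|].
Proof.
apply/setP => c; rewrite !inE.
have -> : [set y in U | gadj adj (inr c) y] = inl @: [set l | (inl l \in U) && adj l c].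
  apply/setP => -[l|r]; rewrite !inE.
  - by rewrite mem_imset; [rewrite inE|exact: inl_inj].
  - by rewrite andbF; apply/esym/imsetP => -[l _].
by rewrite card_imset //; exact: inl_inj.
Qed.

Lemma deg_gt0 S c : odd (deg S c) -> exists2 l, l \in S & adj l c.
Proof.
rewrite /deg => h; have : 0 < #|[set l in S | adj l c]| by case: #|_| h.
by case/card_gt0P => l; rewrite inE => /andP[]; exists l.
Qed.

Lemma gamE (W : {set L + R}) (S : {set L}) : S \subset [set l | inl l \in W] ->
  gamma_o adj (sub_nb adj W S) = [set c | (inr c \in W) && odd (deg S c)].
Proof.
move=> sS; rewrite gam_gen; apply/setP => c; rewrite !inE.
have hl : forall l, (inl l \in sub_nb adj W S) = (l \in S).
  move=> l; rewrite inE mem_imset; last exact: inl_inj.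
  have -> : [exists l0 in S, gadj adj (inl l0) (inl l)] = false.
    by apply/negbTE/existsPn => x /=; rewrite andbF.
  rewrite orbF; case lS: (l \in S); last by rewrite andbF.
  by move/subsetP: sS => /(_ _ lS); rewrite inE => ->.
have -> : #|[set l | (inl l \in sub_nb adj W S) && adj l c]| = deg S c.
  by apply: eq_card => l; rewrite inE hl /deg inE.
have -> : (inr c \in [set inl x | x in S]) = false.
  by apply/negbTE/negP => /imsetP[x _].
case od: (odd (deg S c)); last by rewrite !andbF.
rewrite !andbT /=; case: (inr c \in W) => //=.
have [l lS alc] := deg_gt0 od.
by apply/existsP; exists l; rewrite lS.
Qed.

Local Notation VGt := (VG par bag).
Local Notation LGt := (LG par bag).
Local Notation Bct := (Bc bag).
Local Notation Bvt := (Bv bag).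
Definition Gam u (S : {set L}) := gamma_o adj (sub_nb adj (VGt u) S).

Lemma GamE u (S : {set L}) : S \subset LGt u -> Gam u S = [set c | (inr c \in VGt u) && odd (deg S c)].
Proof. by move=> h; apply: gamE. Qed.

Lemma inVG x u : (x \in VGt u) = [exists v, desc v u && (x \in bag v)].
Proof.
apply/bigcupP/existsP => [[v dv xv]|[v /andP[dv xv]]]; first by exists v; rewrite dv.
by exists v.
Qed.

Lemma bag_VG u : bag u \subset VGt u.
Proof. by apply/subsetP => x xu; rewrite inVG; apply/existsP; exists u; rewrite desc_refl. Qed.

Lemma VG_t : VGt t = VGt t1 :|: VGt t2.
Proof.
apply/setP => x; rewrite inE !inVG; apply/existsP/orP.
- move=> [v /andP[]]; rewrite desc_t => /or3P[/eqP->|h|h] xv.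
  + by left; apply/existsP; exists t1; rewrite desc_refl (bag_child Ht1) xv //.
  + by left; apply/existsP; exists v; rewrite h.
  + by right; apply/existsP; exists v; rewrite h.
- by case=> /existsP[v /andP[dv xv]]; exists v; rewrite xv desc_t dv ?orbT.
Qed.

Lemma VG_inter a b v : par a = Some t -> par b = Some t -> a != b ->
  v \in VGt a -> v \in VGt b -> v \in bag t.
Proof.
move=> ha hb hab; rewrite !inVG => /existsP[ua /andP[dua vua]] /existsP[ub /andP[dub vub]].
apply/negPn/negP => vt.
have := cross ha vub vua dua vt => dub'.
exact: (desc_disj ha hb hab dub' dub).
Qed.

Lemma adj_side a l c : par a = Some t -> adj l c -> inr c \in VGt a -> c \notin Bct t ->
  inl l \in VGt a.
Proof.
move=> ha alc cva cnt.
case: Htd => [[_ _ hedge _] _].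
have [u /andP[lu cu]] := hedge l c alc.
move: cva; rewrite inVG => /existsP[ua /andP[dua cua]].
have := cross ha cu cua dua; rewrite inE in cnt => /(_ cnt) du.
by rewrite inVG; apply/existsP; exists u; rewrite du.
Qed.


Lemma Bc_child a : par a = Some t -> Bct a = Bct t.
Proof. by move=> ha; rewrite /Bc (bag_child ha). Qed.
Lemma Bv_child a : par a = Some t -> Bvt a = Bvt t.
Proof. by move=> ha; rewrite /Bv (bag_child ha). Qed.

Lemma inBv_VG a l : par a = Some t -> l \in Bvt t -> inl l \in VGt a.
Proof. by move=> ha; rewrite inE -(bag_child ha) => h; apply: (subsetP (bag_VG a)). Qed.
Lemma inBc_VG a c : par a = Some t -> c \in Bct t -> inr c \in VGt a.
Proof. by move=> ha; rewrite inE -(bag_child ha) => h; apply: (subsetP (bag_VG a)). Qed.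
Lemma inBc_VGt c : c \in Bct t -> inr c \in VGt t.
Proof. by rewrite inE => h; apply: (subsetP (bag_VG t)). Qed.

Lemma LG_t : LGt t = LGt t1 :|: LGt t2.
Proof. by apply/setP => l; rewrite !inE VG_t inE. Qed.

Lemma LG_inter l : l \in LGt t1 -> l \in LGt t2 -> l \in Bvt t.
Proof. by rewrite !inE => h1 h2; apply: (VG_inter Ht1 Ht2 Hne h1 h2). Qed.

Lemma deg_split (S1 S2 Q : {set L}) c : S1 :&: S2 = Q ->
  deg (S1 :|: S2) c + deg Q c = deg S1 c + deg S2 c.
Proof.
move=> hQ; rewrite /deg -[RHS]cardsUI; congr (_ + _); apply: eq_card => l; rewrite !inE.
- by case: (l \in S1); case: (l \in S2); case: (adj l c).
- by rewrite -hQ inE; case: (l \in S1); case: (l \in S2); case: (adj l c).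
Qed.

Lemma gamQ (Q : {set L}) : Q \subset Bvt t ->
  gamma_o adj (indQ par bag t Q) = [set c | (c \in Bct t) && odd (deg Q c)].
Proof.
move=> sQ; rewrite gam_gen; apply/setP => c; rewrite !inE.
have -> : (inr c \in [set inl x | x in Q]) = false by apply/negbTE/negP => /imsetP[x _].
rewrite mem_imset /=; last by move=> x y [].
have eB : (c \in Bct t) = (inr c \in bag t) by rewrite inE.
rewrite eB; case cB: (inr c \in bag t); last by rewrite andbF.
rewrite (subsetP (bag_VG t) _ cB) /=; congr (odd _); apply: eq_card => l; rewrite !inE.
have -> : (inl l \in [set inr x | x in Bct t]) = false by apply/negbTE/negP => /imsetP[x _].
rewrite mem_imset; last exact: inl_inj.
rewrite orbF; case lQ: (l \in Q); last by rewrite !andbF.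
have -> // : inl l \in VGt t.
by move/subsetP: sQ => /(_ _ lQ); rewrite inE => h; apply: (subsetP (bag_VG t)).
Qed.

Lemma inS (A B : {set L}) l : l \in A :|: B = (l \in A) || (l \in B).
Proof. by rewrite inE. Qed.

Lemma JL (S1 S2 Q : {set L}) :
  S1 \subset LGt t1 -> S2 \subset LGt t2 -> S1 :&: Bvt t = Q -> S2 :&: Bvt t = Q ->
  [/\ S1 :|: S2 \subset LGt t, (S1 :|: S2) :&: Bvt t = Q,
      (S1 :|: S2) :&: LGt t1 = S1, (S1 :|: S2) :&: LGt t2 = S2
    & #|S1 :|: S2| + #|Q| = #|S1| + #|S2|] /\
   (Gam t (S1 :|: S2) :&: Bct t =
        symd (symd (Gam t1 S1 :&: Bct t) (Gam t2 S2 :&: Bct t)) (gamma_o adj (indQ par bag t Q))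
    /\ #|Gam t (S1 :|: S2) :\: Bct t| = #|Gam t1 S1 :\: Bct t| + #|Gam t2 S2 :\: Bct t|).
Proof.
move=> s1 s2 hq1 hq2.
have q1 l : (l \in Q) = (l \in S1) && (inl l \in bag t) by rewrite -hq1 !inE.
have q2 l : (l \in Q) = (l \in S2) && (inl l \in bag t) by rewrite -hq2 !inE.
have l1 l : l \in S1 -> inl l \in VGt t1 by move=> h; have := subsetP s1 _ h; rewrite inE.
have l2 l : l \in S2 -> inl l \in VGt t2 by move=> h; have := subsetP s2 _ h; rewrite inE.
have LGi l : inl l \in VGt t1 -> inl l \in VGt t2 -> inl l \in bag t := VG_inter Ht1 Ht2 Hne.
have sQ : Q \subset Bvt t by rewrite -hq1 subsetIr.
have sS : S1 :|: S2 \subset LGt t by rewrite LG_t; apply: setUSS.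
have e1 : (S1 :|: S2) :&: LGt t1 = S1.
  apply/setP => l; rewrite !inE; case h1: (l \in S1); first by rewrite (l1 _ h1).
  case h2: (l \in S2) => //=; apply/negbTE/negP => h.
  by move: (q2 l) (q1 l); rewrite h1 h2 (LGi _ h (l2 _ h2)) => ->.
have e2 : (S1 :|: S2) :&: LGt t2 = S2.
  apply/setP => l; rewrite !inE; case h2: (l \in S2); first by rewrite (l2 _ h2) orbT.
  rewrite orbF; case h1: (l \in S1) => //=; apply/negbTE/negP => h.
  by move: (q2 l) (q1 l); rewrite h1 h2 (LGi _ (l1 _ h1) h) => ->.
have i12 : S1 :&: S2 = Q.
  apply/setP => l; rewrite inE; case h1: (l \in S1); case h2: (l \in S2) => /=.
  - by rewrite q1 h1 (LGi _ (l1 _ h1) (l2 _ h2)).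
  - by rewrite q2 h2.
  - by rewrite q1 h1.
  - by rewrite q1 h1.
have sS1 : S1 \subset LGt t1 := s1.
rewrite (GamE sS) (GamE s1) (GamE s2) gamQ //.
split; [split => // | split].
- apply/setP => l; rewrite !inE; case h1: (l \in S1); case h2: (l \in S2) => //=.
  + by rewrite q1 h1.
  + by rewrite q1 h1.
  + by rewrite q2 h2.
  + by rewrite q1 h1.
- by rewrite -i12 cardsUI.
- apply/setP => c; rewrite !inE.
  case cB: (inr c \in bag t); last by rewrite !andbF /= ?andbF.
  have cB' : c \in Bct t by rewrite inE.
  rewrite !andbT (inBc_VGt cB') (inBc_VG Ht1 cB') (inBc_VG Ht2 cB') /=.
  have := congr1 odd (deg_split c i12); rewrite !oddD.
  by case: (odd (deg (S1 :|: S2) c)); case: (odd (deg Q c));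
     case: (odd (deg S1 c)); case: (odd (deg S2 c)).
- set A := [set c | (inr c \in VGt t) && odd (deg (S1 :|: S2) c)].
  set A1 := [set c | (inr c \in VGt t1) && odd (deg S1 c)].
  set A2 := [set c | (inr c \in VGt t2) && odd (deg S2 c)].
  have side1 c : c \notin Bct t -> inr c \in VGt t1 -> deg (S1 :|: S2) c = deg S1 c.
    move=> cB cv; apply: eq_card => l; rewrite !inE.
    case ac: (adj l c); rewrite ?andbF // !andbT.
    have := adj_side Ht1 ac cv cB => lv.
    by have := congr1 (fun X : {set L} => l \in X) e1; rewrite !inE lv andbT.
  have side2 c : c \notin Bct t -> inr c \in VGt t2 -> deg (S1 :|: S2) c = deg S2 c.
    move=> cB cv; apply: eq_card => l; rewrite !inE.
    case ac: (adj l c); rewrite ?andbF // !andbT.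
    have := adj_side Ht2 ac cv cB => lv.
    by have := congr1 (fun X : {set L} => l \in X) e2; rewrite !inE lv andbT.
  have nboth c : c \notin Bct t -> inr c \in VGt t1 -> inr c \in VGt t2 -> False.
    by move=> cB v1 v2; move: cB; rewrite inE (VG_inter Ht1 Ht2 Hne v1 v2).
  have -> : A :\: Bct t = (A1 :\: Bct t) :|: (A2 :\: Bct t).
    apply/setP => c; rewrite !inE VG_t inE.
    case cB: (inr c \in bag t) => //=.
    have cB' : c \notin Bct t by rewrite inE cB.
    case v1: (inr c \in VGt t1) => /=.
      case v2: (inr c \in VGt t2); first by case: (nboth c cB' v1 v2).
      by rewrite (side1 c cB' v1) orbF.
    case v2: (inr c \in VGt t2) => //=.
    by rewrite (side2 c cB' v2).
  rewrite cardsU; have -> : (A1 :\: Bct t) :&: (A2 :\: Bct t) = set0.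
    apply/setP => c; rewrite !inE.
    case cB: (inr c \in bag t) => //=; apply/negP => /andP[/andP[v1 _] /andP[v2 _]].
    by apply: (nboth c _ v1 v2); rewrite inE cB.
  by rewrite cards0 subn0.
Qed.


Lemma TSE u I Q d S : (S \in TS adj par bag u I Q d) =
  [&& S != set0, S \subset LGt u, S :&: Bvt u == Q, Gam u S :&: Bct u == I
    & #|Gam u S :\: Bct u| == d].
Proof.
rewrite inE -/(Gam u S).
case: (Gam u S :&: Bct u =P I) => [<-|]; last by rewrite !andbF.
have -> : Gam u S :\: Gam u S :&: Bct u = Gam u S :\: Bct u.
  by apply/setP => c; rewrite !in_setD in_setI; case: (c \in Gam u S); case: (c \in Bct u).
by [].
Qed.

Lemma gDP_cnt u I Q d m : fDP adj par bag u I Q d = Some m ->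
  gDP adj par bag u I Q d = cnt (TS adj par bag u I Q d) (fun S => #|S|) m.
Proof.
move=> h; rewrite /gDP h /cnt; apply: eq_card => S; rewrite !inE.
by case: (S \in TS adj par bag u I Q d) => //=; apply/eqP/eqP => [[]|->].
Qed.

Lemma Gam0 u : Gam u set0 = set0.
Proof.
rewrite GamE ?sub0set //; apply/setP => c; rewrite !inE /deg.
have -> : [set l in (set0 : {set L}) | adj l c] = set0 by apply/setP => l; rewrite !inE.
by rewrite cards0 andbF.
Qed.

Section Main.
Variables (I : {set R}) (Q : {set L}) (d : nat).
Local Notation tup := ({set R} * {set R} * 'I_d.+1 * 'I_d.+1)%type.

Definition pOf (S : {set L}) : tup :=
  (Gam t1 (S :&: LGt t1) :&: Bct t, Gam t2 (S :&: LGt t2) :&: Bct t,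
   inord #|Gam t1 (S :&: LGt t1) :\: Bct t|, inord #|Gam t2 (S :&: LGt t2) :\: Bct t|).

Definition Pp (p : tup) (S1 S2 : {set L}) : bool :=
  [&& okT adj par bag t I Q p, S1 \in TS adj par bag t1 p.1.1.1 Q p.1.2
    & S2 \in TS adj par bag t2 p.1.1.2 Q p.2].

Definition A3 := [set S in TS adj par bag t I Q d |
   (S :&: LGt t1 != set0) && (S :&: LGt t2 != set0)].

Lemma decompS (S : {set L}) : S \subset LGt t -> S = (S :&: LGt t1) :|: (S :&: LGt t2).
Proof. by move=> h; rewrite -setIUr -LG_t; apply/esym/setIidPl. Qed.

Lemma A3_dec (S : {set L}) : S \in A3 -> Pp (pOf S) (S :&: LGt t1) (S :&: LGt t2).
Proof.
rewrite inE TSE => /andP[/and5P[ne sS hQ hI hd] /andP[n1 n2]].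
move/eqP: hQ => hQ; move/eqP: hI => hI; move/eqP: hd => hd.
have BvL a : par a = Some t -> Bvt t \subset LGt a.
  by move=> ha; apply/subsetP => l lB; rewrite inE (inBv_VG ha lB).
have q a : par a = Some t -> S :&: LGt a :&: Bvt t = Q.
  by move=> ha; rewrite -setIA (setIidPr (BvL a ha)).
have [[_ _ _ _ _] [eG eC]] := JL (subsetIr S (LGt t1)) (subsetIr S (LGt t2)) (q _ Ht1) (q _ Ht2).
rewrite -(decompS sS) in eG eC.
have le1 : #|Gam t1 (S :&: LGt t1) :\: Bct t| < d.+1 by rewrite ltnS -hd eC leq_addr.
have le2 : #|Gam t2 (S :&: LGt t2) :\: Bct t| < d.+1 by rewrite ltnS -hd eC leq_addl.
rewrite /Pp /pOf /okT /= !subsetIr !TSE !inordK // (Bc_child Ht1) (Bc_child Ht2)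
  (Bv_child Ht1) (Bv_child Ht2) n1 n2 !subsetIr (q _ Ht1) (q _ Ht2) !eqxx /=.
by rewrite -eG hI eqxx -eC hd eqxx.
Qed.

Lemma A3_comp (p : tup) (S1 S2 : {set L}) : Pp p S1 S2 ->
  [/\ S1 :|: S2 \in A3, pOf (S1 :|: S2) = p, (S1 :|: S2) :&: LGt t1 = S1,
      (S1 :|: S2) :&: LGt t2 = S2 & #|S1 :|: S2| + #|Q| = #|S1| + #|S2|].
Proof.
case: p => [[[I1 I2] d1] d2]; rewrite /Pp /okT /= !TSE.
move=> /and3P[/and4P[sI1 sI2 /eqP hI /eqP hd] /and5P[n1 s1 q1 i1 e1] /and5P[n2 s2 q2 i2 e2]].
rewrite (Bv_child Ht1) (Bc_child Ht1) in q1 i1 e1.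
rewrite (Bv_child Ht2) (Bc_child Ht2) in q2 i2 e2.
move/eqP: q1 => q1; move/eqP: q2 => q2; move/eqP: i1 => i1; move/eqP: i2 => i2.
move/eqP: e1 => e1; move/eqP: e2 => e2.
have [[sS qS f1 f2 cS] [eG eC]] := JL s1 s2 q1 q2.
split => //.
- rewrite inE TSE f1 f2 n1 n2 sS qS eG i1 i2 -hI eC e1 e2 hd !eqxx !andbT /=.
  by apply: contra n1 => /eqP h; rewrite -subset0 -h subsetUl.
- rewrite /pOf f1 f2 i1 i2 e1 e2 !inord_val //.
Qed.

Lemma ole_cost (p : tup) k : ole (costT adj par bag t1 t2 Q p) k =
  [exists S1, exists S2, [&& S1 \in TS adj par bag t1 p.1.1.1 Q p.1.2,
     S2 \in TS adj par bag t2 p.1.1.2 Q p.2 & #|S1| + #|S2| <= k + #|Q|]].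
Proof.
case: p => [[[I1 I2] d1] d2]; rewrite /costT ole_omap /=.
apply/idP/existsP => [/ole_oadd [x [y [hx hy hxy]]]|[S1 /existsP[S2 /and3P[h1 h2 h3]]]].
- have [[S1 S1in e1] _] := fmin_some hx; have [[S2 S2in e2] _] := fmin_some hy.
  by exists S1; apply/existsP; exists S2; rewrite S1in S2in /= e1 e2.
- have [m1 [e1 l1]] := fmin_in (fun S : {set L} => #|S|) h1.
  have [m2 [e2 l2]] := fmin_in (fun S : {set L} => #|S|) h2.
  rewrite /fDP -/(fmin _ _) -/(fmin _ _).
  by rewrite e1 e2 /=; apply: leq_trans h3; apply: leq_add.
Qed.

Lemma fA3 : fmin A3 (fun S => #|S|) = Fjoin adj par bag t t1 t2 I Q d.
Proof.
apply: ole_eq => k; rewrite ole_fmin /Fjoin ole_big.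
apply/existsP/existsP => [[S /andP[SA hk]]|[p /andP[ok]]].
- have hP := A3_dec SA; exists (pOf S).
  have [_ _ _ _ cS] := A3_comp hP.
  move: hP; rewrite /Pp => /and3P[-> h1 h2].
  rewrite ole_cost; apply/existsP; exists (S :&: LGt t1); apply/existsP; exists (S :&: LGt t2).
  rewrite h1 h2 -cS -(decompS _) ?leq_add2r //.
  by move: SA; rewrite inE TSE => /andP[/and5P[]].
- rewrite ole_cost => /existsP[S1 /existsP[S2 /and3P[h1 h2 h3]]].
  have hP : Pp p S1 S2 by rewrite /Pp ok h1 h2.
  have [SA _ _ _ cS] := A3_comp hP.
  by exists (S1 :|: S2); rewrite SA /= -(leq_add2r #|Q|) cS.
Qed.


Lemma inA3 (S : {set L}) : (S \in A3) =
  (S \in TS adj par bag t I Q d) && (S :&: LGt t1 != set0) && (S :&: LGt t2 != set0).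
Proof. by rewrite inE andbA. Qed.

Lemma gA3 m : Fjoin adj par bag t t1 t2 I Q d = Some m ->
  cnt A3 (fun S => #|S|) m = Gjoin adj par bag t t1 t2 I Q d.
Proof.
move=> hF.
set P := fun (p : tup) (y : {set L} * {set L}) =>
  Pp p y.1 y.2 && (#|y.1| + #|y.2| == m + #|Q|).
have e1 : cnt A3 (fun S => #|S|) m = #|[set x : tup * ({set L} * {set L}) | P x.1 x.2]|.
  rewrite /cnt -(@card_in_imset _ _ (fun S => (pOf S, (S :&: LGt t1, S :&: LGt t2)))).
    apply: eq_card => -[p [S1 S2]]; rewrite [in RHS]inE /P /=; apply/imsetP/idP.
    - move=> [S]; rewrite inE => /andP[SA /eqP hS] [-> -> ->].
      have hP := A3_dec SA; have [_ _ _ _ cS] := A3_comp hP.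
      rewrite hP /= -cS -decompS ?hS //.
      by move: SA; rewrite inA3 TSE => /andP[/andP[/and5P[]]].
    - move=> /andP[hP /eqP hc]; have [SA ep f1 f2 cS] := A3_comp hP.
      exists (S1 :|: S2); last by rewrite ep f1 f2.
      by rewrite inE SA /= -(eqn_add2r #|Q|) cS hc.
  move=> S S' SX S'X /(congr1 snd) /= [h1 h2].
  move: SX S'X; rewrite inE => /andP[SA _]; rewrite inE => /andP[S'A _].
  have sub X : X \in A3 -> X \subset LGt t.
    by rewrite inA3 TSE => /andP[/andP[/and5P[]]].
  by rewrite (decompS (sub _ SA)) (decompS (sub _ S'A)) h1 h2.
rewrite e1 card_pair /Gjoin [RHS]big_mkcond /=; apply: eq_bigr => -[[[I1 I2] d1] d2] _.
rewrite hF /P /Pp; cbv beta iota.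
case ok: (okT adj par bag t I Q (I1, I2, d1, d2)) ; last first.
  by apply/eqP; rewrite cards_eq0; apply/eqP/setP => y; rewrite !inE.
case: (costT adj par bag t1 t2 Q (I1, I2, d1, d2) =P Some m) => [hc|hc].
- move: hc; rewrite /costT /=.
  case e1': (fDP adj par bag t1 I1 Q d1) => [m1|] //.
  case e2': (fDP adj par bag t2 I2 Q d2) => [m2|] //= [hm].
  have [[S1w S1win hS1w] hm1] := fmin_some e1'.
  have [_ hm2] := fmin_some e2'.
  have qle : #|Q| <= m1.
    move: S1win; rewrite TSE (Bv_child Ht1) => /and5P[_ _ /eqP <- _ _].
    by rewrite -hS1w /= subset_leq_card // subsetIl.
  rewrite (gDP_cnt e1') (gDP_cnt e2') /cnt -cardsX.
  move: hm1 hm2; move: (TS adj par bag t1 I1 Q d1) (TS adj par bag t2 I2 Q d2) => T1 T2 hm1 hm2.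
  apply: eq_card => -[S1 S2]; rewrite !inE /=.
  case h1: (S1 \in T1); case h2: (S2 \in T2); rewrite ?andbF //=.
  have := hm1 _ h1; have := hm2 _ h2; rewrite /= => l2 l1.
  by apply/eqP/andP => [h|[/eqP h /eqP h']]; [split; apply/eqP|]; lia.
- apply/eqP; rewrite cards_eq0; apply/eqP/setP => -[S1 S2]; rewrite [in LHS]inE in_set0 /=.
  apply/negP => /andP[/andP[h1 h2] /eqP hs].
  have : ole (costT adj par bag t1 t2 Q (I1, I2, d1, d2)) m.
    rewrite ole_cost; apply/existsP; exists S1; apply/existsP; exists S2.
    by rewrite h1 h2 /= hs.
  case ec: (costT adj par bag t1 t2 Q (I1, I2, d1, d2)) => [c|] //= hcm.
  have : ole (Fjoin adj par bag t t1 t2 I Q d) c.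
    rewrite /Fjoin ole_big; apply/existsP; exists (I1, I2, d1, d2).
    by rewrite ok ec /= leqnn.
  rewrite hF /= => hmc; apply: hc; rewrite ec; congr Some; apply/anti_leq; by rewrite hcm hmc.
Qed.

Lemma caseQ : Q != set0 ->
  fDP adj par bag t I Q d = Fjoin adj par bag t t1 t2 I Q d /\
  (fDP adj par bag t I Q d <> None ->
     gDP adj par bag t I Q d = Gjoin adj par bag t t1 t2 I Q d).
Proof.
move=> hQ.
have eT : TS adj par bag t I Q d = A3.
  apply/setP => S; rewrite inA3.
  case SA: (S \in TS adj par bag t I Q d) => //=.
  move: SA; rewrite TSE => /and5P[_ sS /eqP hq _ _].
  have ne a : par a = Some t -> S :&: LGt a != set0.
    move=> ha; apply: contra hQ => /eqP h; rewrite -subset0 -h -hq.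
    apply/subsetP => l; rewrite !in_setI => /andP[-> lB] /=.
    by rewrite inE (inBv_VG ha lB).
  by rewrite !ne.
have hf : fDP adj par bag t I Q d = fmin A3 (fun S => #|S|) by rewrite -eT.
split; first by rewrite hf fA3.
case ef: (fDP adj par bag t I Q d) => [m|] // _.
rewrite (gDP_cnt ef) eT; apply: gA3; rewrite -fA3 -hf ef //.
Qed.

Lemma symd0 (X : {set R}) : symd X set0 = X.
Proof. by apply/setP => c; rewrite !inE; case: (c \in X). Qed.
Lemma sym0d (X : {set R}) : symd set0 X = X.
Proof. by apply/setP => c; rewrite !inE; case: (c \in X). Qed.

Lemma gamQ0 : gamma_o adj (indQ par bag t set0) = set0.
Proof.
rewrite gamQ ?sub0set //; apply/setP => c; rewrite !inE /deg.
have -> : [set l in (set0 : {set L}) | adj l c] = set0 by apply/setP => l; rewrite !inE.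
by rewrite cards0 andbF.
Qed.

Lemma single1 (S : {set L}) : Q = set0 -> S \subset LGt t1 -> S :&: Bvt t = set0 ->
  (S \in TS adj par bag t I Q d) = (S \in TS adj par bag t1 I Q d).
Proof.
move=> hQ s1 h0.
have [[sS qS _ _ _] [eG eC]] := JL s1 (sub0set (LGt t2)) h0 (set0I _).
rewrite setU0 Gam0 set0I symd0 gamQ0 symd0 in eG.
rewrite setU0 Gam0 set0D cards0 addn0 in eC.
rewrite setU0 in sS.
by rewrite !TSE (Bv_child Ht1) (Bc_child Ht1) eG eC hQ h0 s1 sS.
Qed.

Lemma single2 (S : {set L}) : Q = set0 -> S \subset LGt t2 -> S :&: Bvt t = set0 ->
  (S \in TS adj par bag t I Q d) = (S \in TS adj par bag t2 I Q d).
Proof.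
move=> hQ s2 h0.
have [[sS qS _ _ _] [eG eC]] := JL (sub0set (LGt t1)) s2 (set0I _) h0.
rewrite set0U Gam0 set0I sym0d gamQ0 symd0 in eG.
rewrite set0U Gam0 set0D cards0 add0n in eC.
rewrite set0U in sS.
by rewrite !TSE (Bv_child Ht2) (Bc_child Ht2) eG eC hQ h0 s2 sS.
Qed.

Lemma cross0 (S : {set L}) : S \subset LGt t1 -> S :&: Bvt t = set0 -> S :&: LGt t2 = set0.
Proof.
move=> s1 h0; apply/setP => l; rewrite in_setI in_set0.
case lS: (l \in S) => //=; apply/negbTE/negP => l2.
have lB := LG_inter (subsetP s1 _ lS) l2.
have : l \in S :&: Bvt t by rewrite in_setI lS lB.
by rewrite h0 in_set0.
Qed.

Lemma cross0' (S : {set L}) : S \subset LGt t2 -> S :&: Bvt t = set0 -> S :&: LGt t1 = set0.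
Proof.
move=> s2 h0; apply/setP => l; rewrite in_setI in_set0.
case lS: (l \in S) => //=; apply/negbTE/negP => l1.
have lB := LG_inter l1 (subsetP s2 _ lS).
have : l \in S :&: Bvt t by rewrite in_setI lS lB.
by rewrite h0 in_set0.
Qed.


Lemma TS_split : Q = set0 -> TS adj par bag t I Q d =
  A3 :|: (TS adj par bag t1 I Q d :|: TS adj par bag t2 I Q d).
Proof.
move=> hQ; apply/setP => S; rewrite !in_setU inA3.
apply/idP/idP.
- move=> h; have h' := h; rewrite TSE in h'; case/and5P: h' => ne sS /eqP hq _ _; rewrite h /=.
  have h0 : S :&: Bvt t = set0 by rewrite hq.
  case n1: (S :&: LGt t1 == set0).
    have s2 : S \subset LGt t2 by rewrite (decompS sS) (eqP n1) set0U subsetIr.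
    by rewrite -(single2 hQ s2 h0) h !orbT.
  case n2: (S :&: LGt t2 == set0) => //=.
  have s1 : S \subset LGt t1 by rewrite (decompS sS) (eqP n2) setU0 subsetIr.
  by rewrite -(single1 hQ s1 h0) h.
- case/or3P => [/andP[/andP[] //]| h | h].
  + have h' := h; rewrite TSE (Bv_child Ht1) in h'; case/and5P: h' => _ s1 /eqP hq _ _.
    by rewrite (single1 hQ s1) // hq.
  + have h' := h; rewrite TSE (Bv_child Ht2) in h'; case/and5P: h' => _ s2 /eqP hq _ _.
    by rewrite (single2 hQ s2) // hq.
Qed.

Lemma disj1 : Q = set0 -> [disjoint A3 & TS adj par bag t1 I Q d :|: TS adj par bag t2 I Q d].
Proof.
move=> hQ; rewrite -setI_eq0; apply/eqP/setP => S; rewrite in_setI in_set0 in_setU inA3.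
apply/negP => /andP[/andP[/andP[_ n1] n2] /orP[] h].
- move: h; rewrite TSE (Bv_child Ht1) => /and5P[_ s1 /eqP hq _ _].
  by move: n2; rewrite cross0 ?eqxx // hq.
- move: h; rewrite TSE (Bv_child Ht2) => /and5P[_ s2 /eqP hq _ _].
  by move: n1; rewrite cross0' ?eqxx // hq.
Qed.

Lemma disj2 : Q = set0 -> [disjoint TS adj par bag t1 I Q d & TS adj par bag t2 I Q d].
Proof.
move=> hQ; rewrite -setI_eq0; apply/eqP/setP => S; rewrite in_setI in_set0.
apply/negP => /andP[h1 h2].
move: h1; rewrite TSE (Bv_child Ht1) => /and5P[ne s1 /eqP hq _ _].
move: h2; rewrite TSE => /and5P[_ s2 _ _ _].
have := cross0 s1; rewrite hq hQ => /(_ erefl).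
by rewrite (setIidPl s2) => e; move: ne; rewrite e eqxx.
Qed.

Lemma case0 : Q = set0 ->
     fDP adj par bag t I Q d =
       omin (Fjoin adj par bag t t1 t2 I Q d)
            (omin (fDP adj par bag t1 I Q d) (fDP adj par bag t2 I Q d)) /\
     (fDP adj par bag t I Q d <> None ->
        gDP adj par bag t I Q d =
          (fDP adj par bag t I Q d == Fjoin adj par bag t t1 t2 I Q d)
            * Gjoin adj par bag t t1 t2 I Q d
          + (fDP adj par bag t I Q d == fDP adj par bag t1 I Q d)
            * gDP adj par bag t1 I Q d
          + (fDP adj par bag t I Q d == fDP adj par bag t2 I Q d)
            * gDP adj par bag t2 I Q d).
Proof.
move=> hQ; have eT := TS_split hQ.
have hf u : fDP adj par bag u I Q d = fmin (TS adj par bag u I Q d) (fun S => #|S|) by [].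
split.
  by rewrite hf eT !fmin_U fA3 -!hf.
case ef: (fDP adj par bag t I Q d) => [m|] // _.
have ef' : fmin (TS adj par bag t I Q d) (fun S => #|S|) = Some m by rewrite -hf.
rewrite (gDP_cnt ef) {1}eT !cntU ?disj1 ?disj2 // -addnA.
have sA : A3 \subset TS adj par bag t I Q d by rewrite eT subsetUl.
have s1 : TS adj par bag t1 I Q d \subset TS adj par bag t I Q d.
  by rewrite eT; apply: subset_trans (subsetUl _ _) (subsetUr _ _).
have s2 : TS adj par bag t2 I Q d \subset TS adj par bag t I Q d.
  by rewrite eT; apply: subset_trans (subsetUr _ _) (subsetUr _ _).
congr (_ + (_ + _)).
- rewrite (cnt_ind sA ef') fA3; case: eqP => [e|_]; last by rewrite !mul0n.
  by rewrite (gA3 (esym e)).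
- rewrite (cnt_ind s1 ef') -hf; case: eqP => [e|_]; last by rewrite !mul0n.
  by rewrite -(gDP_cnt (esym e)).
- rewrite (cnt_ind s2 ef') -hf; case: eqP => [e|_]; last by rewrite !mul0n.
  by rewrite -(gDP_cnt (esym e)).
Qed.

End Main.
End Struct.

Theorem mainTheorem13 (L R : finType) (adj : L -> R -> bool)
  (N : finType) (par : N -> option N) (bag : N -> {set L + R})
  (Htd : rooted_nice_td adj par bag) (b : nat) (t t1 t2 : N)
  (Ht1 : par t1 = Some t) (Ht2 : par t2 = Some t) (Hne : t1 != t2)
  (I : {set R}) (Q : {set L}) (d : nat)
  (HI : I \subset Bc bag t) (HQ : Q \subset Bv bag t) (Hd : d <= b) :
  (Q != set0 ->
     fDP adj par bag t I Q d = Fjoin adj par bag t t1 t2 I Q d /\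
     (fDP adj par bag t I Q d <> None ->
        gDP adj par bag t I Q d = Gjoin adj par bag t t1 t2 I Q d)) /\
  (Q = set0 ->
     fDP adj par bag t I Q d =
       omin (Fjoin adj par bag t t1 t2 I Q d)
            (omin (fDP adj par bag t1 I Q d) (fDP adj par bag t2 I Q d)) /\
     (fDP adj par bag t I Q d <> None ->
        gDP adj par bag t I Q d =
          (fDP adj par bag t I Q d == Fjoin adj par bag t t1 t2 I Q d)
            * Gjoin adj par bag t t1 t2 I Q d
          + (fDP adj par bag t I Q d == fDP adj par bag t1 I Q d)
            * gDP adj par bag t1 I Q d
          + (fDP adj par bag t I Q d == fDP adj par bag t2 I Q d)
            * gDP adj par bag t2 I Q d)).
Proof.
split.
- exact: (@caseQ _ _ _ _ _ _ Htd _ _ _ Ht1 Ht2 Hne I Q d).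
- exact: (@case0 _ _ _ _ _ _ Htd _ _ _ Ht1 Ht2 Hne I Q d).
Qed.
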